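(* Let $\mathcal{S}\subset(\mathbb{N}\cup\{\infty\})^6$ be the set of the following 13 vectors: $B=(\infty,\infty,\infty,\infty,\infty,\infty)$, $2S=(\infty,\infty,\infty,\infty,\infty,1)$, $RS=(\infty,\infty,\infty,\infty,1,1)$, $PF=(\infty,2,\infty,\infty,\infty,1)$, $S=(\infty,\infty,\infty,\infty,0,0)$, $RT=(\infty,\infty,\infty,1,1,1)$, $FT=(\infty,\infty,\infty,0,1,1)$, $R=(\infty,2,1,1,1,1)$, $RV=(\infty,2,1,0,1,1)$, $IF=(\infty,2,0,0,\infty,1)$, $F=(\infty,2,0,0,1,1)$, $T=(\infty,1,0,0,0,0)$, $E=(1,1,0,0,0,0)$. Then $\mathcal{S}$ is not a sublattice of $(\mathbb{N}\cup\{\infty\})^6$ under componentwise $\min/\max$, and the sublattice $L_{30}$ it generates has exactly $30$ elements (so the closure adds $17$ elements not in $\mathcal{S}$); moreover, iterating the operation of adjoining all pairwise componentwise meets and joins stabilizes after three rounds.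
   Context: $(\mathbb{N}\cup\{\infty\})^6$ is ordered componentwise with $\infty$ above every natural number; meet and join are componentwise $\min$ and $\max$. These 13 vectors are Bisping's energy vectors of the named equivalences (bisimulation, 2-nested simulation, ready simulation, possible futures, simulation, ready traces, failure traces, readiness, revivals, impossible futures, failures, traces, enabledness). *)

(* Defs.v *)
From Stdlib Require Import List Arith.
Import ListNotations.

Inductive ext : Type := Fin (n : nat) | Inf.

Definition emin (a b : ext) : ext :=
  match a, b with
  | Inf, y => y
  | x, Inf => x
  | Fin m, Fin n => Fin (Nat.min m n)
  end.

Definition emax (a b : ext) : ext :=
  match a, b with
  | Inf, _ => Inf
  | _, Inf => Inf
  | Fin m, Fin n => Fin (Nat.max m n)
  end.

Record vec : Type := V { c1 : ext; c2 : ext; c3 : ext; c4 : ext; c5 : ext; c6 : ext }.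

Definition vmeet (x y : vec) : vec :=
  V (emin (c1 x) (c1 y)) (emin (c2 x) (c2 y)) (emin (c3 x) (c3 y))
    (emin (c4 x) (c4 y)) (emin (c5 x) (c5 y)) (emin (c6 x) (c6 y)).

Definition vjoin (x y : vec) : vec :=
  V (emax (c1 x) (c1 y)) (emax (c2 x) (c2 y)) (emax (c3 x) (c3 y))
    (emax (c4 x) (c4 y)) (emax (c5 x) (c5 y)) (emax (c6 x) (c6 y)).

Definition vset := vec -> Prop.

Definition set_eq (A B : vset) : Prop := forall x, A x <-> B x.

Definition vB  := V Inf Inf Inf Inf Inf Inf.
Definition v2S := V Inf Inf Inf Inf Inf (Fin 1).
Definition vRS := V Inf Inf Inf Inf (Fin 1) (Fin 1).
Definition vPF := V Inf (Fin 2) Inf Inf Inf (Fin 1).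
Definition vS  := V Inf Inf Inf Inf (Fin 0) (Fin 0).
Definition vRT := V Inf Inf Inf (Fin 1) (Fin 1) (Fin 1).
Definition vFT := V Inf Inf Inf (Fin 0) (Fin 1) (Fin 1).
Definition vR  := V Inf (Fin 2) (Fin 1) (Fin 1) (Fin 1) (Fin 1).
Definition vRV := V Inf (Fin 2) (Fin 1) (Fin 0) (Fin 1) (Fin 1).
Definition vIF := V Inf (Fin 2) (Fin 0) (Fin 0) Inf (Fin 1).
Definition vF  := V Inf (Fin 2) (Fin 0) (Fin 0) (Fin 1) (Fin 1).
Definition vT  := V Inf (Fin 1) (Fin 0) (Fin 0) (Fin 0) (Fin 0).
Definition vE  := V (Fin 1) (Fin 1) (Fin 0) (Fin 0) (Fin 0) (Fin 0).

Definition Svecs : list vec :=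
  [vB; v2S; vRS; vPF; vS; vRT; vFT; vR; vRV; vIF; vF; vT; vE].

Definition Sset : vset := fun x => In x Svecs.

Definition closed (A : vset) : Prop :=
  forall a b, A a -> A b -> A (vmeet a b) /\ A (vjoin a b).

Inductive gen (A : vset) : vset :=
  | gen_base : forall x, A x -> gen A x
  | gen_meet : forall a b, gen A a -> gen A b -> gen A (vmeet a b)
  | gen_join : forall a b, gen A a -> gen A b -> gen A (vjoin a b).

Definition step (A : vset) : vset :=
  fun x => A x \/ exists a b, A a /\ A b /\ (x = vmeet a b \/ x = vjoin a b).

Fixpoint iter_step (n : nat) (A : vset) : vset :=
  match n with 0 => A | S k => step (iter_step k A) end.

(* Main.v *)
Require Import Defs.
From Stdlib Require Import List Arith Lia Bool.
Import ListNotations.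

Definition ext_eq_dec : forall a b : ext, {a = b} + {a <> b}.
Proof. decide equality; apply Nat.eq_dec. Defined.
Definition vec_eq_dec : forall a b : vec, {a = b} + {a <> b}.
Proof. decide equality; apply ext_eq_dec. Defined.

Definition inb (x : vec) (l : list vec) : bool :=
  if in_dec vec_eq_dec x l then true else false.
Lemma inb_In x l : inb x l = true <-> In x l.
Proof. unfold inb; destruct in_dec; split; congruence || tauto. Qed.

Definition stepL (l : list vec) : list vec :=
  nodup vec_eq_dec (l ++ flat_map (fun a => flat_map (fun b => [vmeet a b; vjoin a b]) l) l).

Fixpoint iterL (n : nat) (l : list vec) : list vec :=
  match n with 0 => l | S k => stepL (iterL k l) end.

Lemma stepL_spec l x : step (fun y => In y l) x <-> In x (stepL l).
Proof.
  unfold step, stepL. rewrite nodup_In, in_app_iff, in_flat_map. split.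
  - intros [H|(a&b&Ha&Hb&Hx)]; [now left|right].
    exists a; split; auto. apply in_flat_map. exists b; split; auto.
    simpl; destruct Hx; auto.
  - intros [H|(a&Ha&H)]; [now left|right].
    apply in_flat_map in H as (b&Hb&H). exists a, b. simpl in H; intuition.
Qed.

Lemma iter_spec n l x : iter_step n (fun y => In y l) x <-> In x (iterL n l).
Proof.
  revert x; induction n; intro x; simpl; [tauto|].
  rewrite <- stepL_spec. unfold step. split.
  - intros [H|(a&b&Ha&Hb&H)]; [left; apply IHn; auto|right].
    exists a, b; rewrite <- !IHn; auto.
  - intros [H|(a&b&Ha&Hb&H)]; [left; apply IHn; auto|right].
    exists a, b; rewrite !IHn; auto.
Qed.

Lemma iter_gen n A x : iter_step n A x -> gen A x.
Proof.
  revert x; induction n; intro x; simpl; [apply gen_base|].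
  intros [H|(a&b&Ha&Hb&[->| ->])]; auto using gen_meet, gen_join.
Qed.

Lemma iter_mono n m A x : n <= m -> iter_step n A x -> iter_step m A x.
Proof.
  induction 1; auto. intro H0; simpl; left; auto.
Qed.

Notation L30 := (iterL 2 Svecs).

Definition closedb (l : list vec) : bool :=
  forallb (fun a => forallb (fun b => inb (vmeet a b) l && inb (vjoin a b) l) l) l.

Lemma closedb_ok : closedb L30 = true.
Proof. vm_compute. reflexivity. Qed.

Lemma closedb_sound l a b : closedb l = true -> In a l -> In b l -> In (vmeet a b) l /\ In (vjoin a b) l.
Proof.
  intros H Ha Hb. unfold closedb in H.
  rewrite forallb_forall in H. specialize (H a Ha). rewrite forallb_forall in H.
  specialize (H b Hb). apply andb_prop in H as [H1 H2].
  rewrite inb_In in H1, H2; auto.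
Qed.

Lemma L30_closed a b : In a L30 -> In b L30 -> In (vmeet a b) L30 /\ In (vjoin a b) L30.
Proof. apply closedb_sound, closedb_ok. Qed.

Lemma gen_L30 x : gen Sset x <-> In x L30.
Proof.
  split.
  - induction 1.
    + apply (proj1 (iter_spec 2 Svecs x)).
      apply (iter_mono 0 2 (fun y => In y Svecs) x); [auto|exact H].
    + exact (proj1 (L30_closed a b IHgen1 IHgen2)).
    + exact (proj2 (L30_closed a b IHgen1 IHgen2)).
  - intro H. apply (iter_gen 2). change (iter_step 2 (fun y => In y Svecs) x).
    exact (proj2 (iter_spec 2 Svecs x) H).
Qed.

Definition L17 := filter (fun x => negb (inb x Svecs)) L30.

Lemma inclb_ok : forallb (fun x => inb x L30) (iterL 3 Svecs) = true.
Proof. vm_compute. reflexivity. Qed.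

Definition w := V Inf (Fin 2) Inf (Fin 0) Inf (Fin 1).
Lemma w2 : inb w (iterL 2 Svecs) = true.
Proof. vm_compute. reflexivity. Qed.
Lemma w1 : inb w (iterL 1 Svecs) = false.
Proof. vm_compute. reflexivity. Qed.

Theorem mainTheorem10 :
  (* S is not a sublattice *)
  ~ closed Sset /\
  (* the generated sublattice L30 has exactly 30 elements *)
  (exists l : list vec,
      NoDup l /\ length l = 30 /\ (forall x, gen Sset x <-> In x l)) /\
  (* exactly 17 of them lie outside S *)
  (exists l' : list vec,
      NoDup l' /\ length l' = 17 /\ (forall x, (gen Sset x /\ ~ Sset x) <-> In x l')) /\
  (* iterating "adjoin pairwise meets/joins": rounds 1 and 2 add elements,
     round 3 adds nothing, and from round 3 on the result is L30 *)
  ~ set_eq (iter_step 1 Sset) (iter_step 2 Sset) /\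
  set_eq (iter_step 2 Sset) (iter_step 3 Sset) /\
  (forall n, 3 <= n -> set_eq (iter_step n Sset) (gen Sset)).
Proof.
  assert (ND : NoDup L30) by (apply NoDup_nodup).
  split; [|split; [|split; [|split; [|split]]]].
  - intro Hc. destruct (Hc vPF vS) as [H _];
      [apply inb_In; vm_compute; reflexivity|apply inb_In; vm_compute; reflexivity|].
    apply inb_In in H. vm_compute in H. discriminate.
  - exists L30. split; [exact ND|split; [vm_compute; reflexivity|exact gen_L30]].
  - exists L17. split; [apply NoDup_filter; exact ND|split; [vm_compute; reflexivity|]].
    intro x. unfold L17. rewrite filter_In, gen_L30, Bool.negb_true_iff.
    unfold Sset. split.
    + intros [H1 H2]; split; [exact H1|]. destruct (inb x Svecs) eqn:E; [|reflexivity].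
      apply inb_In in E; contradiction.
    + intros [H1 H2]; split; [exact H1|]. intro H. apply inb_In in H. congruence.
  - intro H. destruct (H w) as [_ H2].
    assert (A2 : iter_step 2 (fun y => In y Svecs) w)
      by exact (proj2 (iter_spec 2 Svecs w) (proj1 (inb_In _ _) w2)).
    change (iter_step 2 (fun y => In y Svecs) w -> iter_step 1 (fun y => In y Svecs) w) in H2.
    specialize (H2 A2).
    apply (proj1 (iter_spec 1 Svecs w)) in H2. apply (proj2 (inb_In _ _)) in H2.
    rewrite w1 in H2. discriminate.
  - intro x. split; [apply (iter_mono 2 3); auto|].
    intro H. change (iter_step 3 (fun y => In y Svecs) x) in H.
    change (iter_step 2 (fun y => In y Svecs) x).
    apply (proj2 (iter_spec 2 Svecs x)).
    pose proof (proj1 (iter_spec 3 Svecs x) H) as H3.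
    pose proof inclb_ok as K. rewrite forallb_forall in K.
    exact (proj1 (inb_In _ _) (K x H3)).
  - intros n Hn x. split; [apply iter_gen|].
    intro H. apply (iter_mono 2 n); [lia|].
    change (iter_step 2 (fun y => In y Svecs) x).
    exact (proj2 (iter_spec 2 Svecs x) (proj1 (gen_L30 x) H)).
Qed.
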